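(* Let $|\psi\rangle=\alpha|0\rangle+\beta|1\rangle$ be a pure qubit state and let $R=-|\alpha|^2\log_2|\alpha|^2-|\beta|^2\log_2|\beta|^2=R_I(|\psi\rangle)$. For every $\varepsilon>0$ there is $n_0$ such that for all $n\ge n_0$ there exists an incoherent operation on $(\mathbb C^2)^{\otimes n}$ with respect to the product computational basis, with Kraus operators $\{K_j\}$, such that for each outcome $j$ with $p_j=\|K_j|\psi\rangle^{\otimes n}\|^2>0$ the normalized post-measurement state $K_j|\psi\rangle^{\otimes n}/\sqrt{p_j}$ is, up to an incoherent relabeling of basis states (equivalently, a permutation of computational basis vectors), the state $|\Psi_2\rangle^{\otimes r_j}\otimes|0\cdots0\rangle$ for some integer $r_j\ge0$, where $|\Psi_2\rangle=(|0\rangle+|1\rangle)/\sqrt2$, and the expected number of distilled copies satisfies $\sum_jp_jr_j\ge n(R-\varepsilon)$.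
   Context: An incoherent operation with respect to an orthonormal basis $\{|i\rangle\}$ is a CPTP map $\Phi(\rho)=\sum_jK_j\rho K_j^\dagger$ with $\sum_jK_j^\dagger K_j=\mathbb 1$ such that $K_j\delta K_j^\dagger$ is diagonal in that basis whenever $\delta$ is diagonal in that basis. On $(\mathbb C^2)^{\otimes n}$ the basis is the product computational basis $\{|x_1\cdots x_n\rangle: x_k\in\{0,1\}\}$. For a pure state $|\phi\rangle=\sum_ia_i|i\rangle$, $R_I(|\phi\rangle)=-\sum_i|a_i|^2\log_2|a_i|^2$. *)

(* Defs.v *)
(* Complex numbers are
   modelled as pairs of reals; operators on (C^2)^{(x)n} as 2^n x 2^n
   complex matrices indexed by nat (entries outside [0,2^n) are ignored). *)
From Stdlib Require Import Reals Arith.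
Open Scope R_scope.

Definition Cx : Type := (R * R)%type.
Definition RtoC (x : R) : Cx := (x, 0).
Definition C0 : Cx := RtoC 0.
Definition C1 : Cx := RtoC 1.
Definition Cadd (z w : Cx) : Cx := (fst z + fst w, snd z + snd w).
Definition Cmul (z w : Cx) : Cx :=
  (fst z * fst w - snd z * snd w, fst z * snd w + snd z * fst w).
Definition Cconj (z : Cx) : Cx := (fst z, - snd z).
Definition Cnorm2 (z : Cx) : R := fst z * fst z + snd z * snd z.

Fixpoint Csum (f : nat -> Cx) (n : nat) : Cx :=
  match n with
  | O => C0
  | S n' => Cadd (Csum f n') (f n')
  end.
Fixpoint Rsum (f : nat -> R) (n : nat) : R :=
  match n with
  | O => 0
  | S n' => Rsum f n' + f n'
  end.

Definition Mat : Type := nat -> nat -> Cx.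
Definition Vec : Type := nat -> Cx.
Definition Mmul (D : nat) (A B : Mat) : Mat :=
  fun i k => Csum (fun j => Cmul (A i j) (B j k)) D.
Definition Madj (A : Mat) : Mat := fun i j => Cconj (A j i).
Definition Mapply (D : nat) (A : Mat) (v : Vec) : Vec :=
  fun i => Csum (fun k => Cmul (A i k) (v k)) D.
Definition Vnorm2 (D : nat) (v : Vec) : R := Rsum (fun i => Cnorm2 (v i)) D.
Definition Vscale (c : Cx) (v : Vec) : Vec := fun i => Cmul c (v i).

Definition is_diag (D : nat) (M : Mat) : Prop :=
  forall i j, (i < D)%nat -> (j < D)%nat -> i <> j -> M i j = C0.

Definition incoherent_op (D m : nat) (K : nat -> Mat) : Prop :=
  (forall i k, (i < D)%nat -> (k < D)%nat ->
     Csum (fun j => Mmul D (Madj (K j)) (K j) i k) m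
       = (if Nat.eqb i k then C1 else C0)) /\
  (forall j, (j < m)%nat -> forall delta : Mat, is_diag D delta ->
     is_diag D (Mmul D (Mmul D (K j) delta) (Madj (K j)))).

(* |psi>^{(x)n} with |psi> = alpha|0> + beta|1>: the amplitude of |x_1...x_n>
   (index i, bits of i) is the product over qubits of alpha or beta. *)
Fixpoint psi_tensor (alpha beta : Cx) (n : nat) (i : nat) : Cx :=
  match n with
  | O => C1
  | S n' => Cmul (if Nat.testbit i n' then beta else alpha)
                 (psi_tensor alpha beta n' i)
  end.

(* |Psi_2>^{(x) r} (x) |0...0> on n qubits, qubit 1 being the most significant
   bit of the index: amplitude 2^{-r/2} iff the last n-r bits are 0. *)
Definition target_state (n r : nat) : Vec :=
  fun i => if Nat.eqb (Nat.modulo i (2 ^ (n - r))) 0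
           then RtoC (/ sqrt (2 ^ r)) else C0.

Definition perm_on (D : nat) (s : nat -> nat) : Prop :=
  (forall i, (i < D)%nat -> (s i < D)%nat) /\
  (forall i j, (i < D)%nat -> (j < D)%nat -> s i = s j -> i = j).

Definition log2 (x : R) : R := ln x / ln 2.
(* -x log2 x with the convention 0 log 0 = 0 *)
Definition negxlogx (x : R) : R := if Rle_dec x 0 then 0 else - x * log2 x.
Definition R_I_qubit (alpha beta : Cx) : R :=
  negxlogx (Cnorm2 alpha) + negxlogx (Cnorm2 beta).

(* Main.v *)
Require Import Defs.
From Stdlib Require Import Reals Arith Lra Lia Classical.
Open Scope R_scope.

Lemma Rsum_ext f g N : (forall i, (i < N)%nat -> f i = g i) -> Rsum f N = Rsum g N.
Proof. induction N; intros H; simpl; auto. rewrite IHN by (intros; apply H; lia). rewrite (H N) by lia. reflexivity. Qed.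

Lemma Rsum_0 N : Rsum (fun _ => 0) N = 0.
Proof. induction N; simpl; auto. rewrite IHN; ring. Qed.

Lemma Rsum_zero f N : (forall i, (i < N)%nat -> f i = 0) -> Rsum f N = 0.
Proof. intros H. rewrite (Rsum_ext f (fun _ => 0)) by auto. apply Rsum_0. Qed.

Lemma Rsum_plus f g N : Rsum (fun i => f i + g i) N = Rsum f N + Rsum g N.
Proof. induction N; simpl; [ring|]. rewrite IHN; ring. Qed.

Lemma Rsum_minus f g N : Rsum (fun i => f i - g i) N = Rsum f N - Rsum g N.
Proof. induction N; simpl; [ring|]. rewrite IHN; ring. Qed.

Lemma Rsum_scal c f N : Rsum (fun i => c * f i) N = c * Rsum f N.
Proof. induction N; simpl; [ring|]. rewrite IHN; ring. Qed.

Lemma Rsum_const c N : Rsum (fun _ => c) N = INR N * c.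
Proof. induction N; [simpl; ring|]. change (Rsum (fun _ => c) (S N)) with (Rsum (fun _ => c) N + c). rewrite IHN, S_INR; ring. Qed.

Lemma Rsum_split f a b : Rsum f (a + b) = Rsum f a + Rsum (fun i => f (a + i)%nat) b.
Proof. induction b; simpl. rewrite Nat.add_0_r; ring. rewrite Nat.add_succ_r. simpl. rewrite IHb. ring. Qed.

Lemma Rsum_swap (f : nat -> nat -> R) M N :
  Rsum (fun j => Rsum (fun x => f j x) N) M = Rsum (fun x => Rsum (fun j => f j x) M) N.
Proof.
  induction M; simpl. symmetry; apply Rsum_0.
  rewrite IHM. rewrite <- Rsum_plus. reflexivity.
Qed.

Lemma Rsum_le f g N : (forall i, (i < N)%nat -> f i <= g i) -> Rsum f N <= Rsum g N.
Proof. induction N; intros H; simpl; [lra|]. assert (f N <= g N) by (apply H; lia).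
  assert (Rsum f N <= Rsum g N) by (apply IHN; intros; apply H; lia). lra. Qed.

Lemma Rsum_unique (c : nat -> bool) (f : nat -> R) N j0 :
  (j0 < N)%nat -> c j0 = true -> (forall j, (j < N)%nat -> c j = true -> j = j0) ->
  Rsum (fun j => if c j then f j else 0) N = f j0.
Proof.
  induction N; intros H0 Hc Hu; [lia|]. simpl.
  destruct (Nat.eq_dec j0 N) as [->|Hne].
  - rewrite Hc. rewrite Rsum_zero. ring.
    intros i Hi. destruct (c i) eqn:E; auto. assert (i = N) by (apply Hu; auto; lia). lia.
  - rewrite IHN; try lia; auto. destruct (c N) eqn:E; [|ring].
    assert (N = j0) by (apply Hu; auto). lia.
Qed.

Lemma Rsum_none (c : nat -> bool) (f : nat -> R) N :
  (forall j, (j < N)%nat -> c j = false) -> Rsum (fun j => if c j then f j else 0) N = 0.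
Proof. intros H. apply Rsum_zero. intros i Hi. rewrite H; auto. Qed.

Lemma Csum_RR f N : Csum f N = (Rsum (fun i => fst (f i)) N, Rsum (fun i => snd (f i)) N).
Proof. induction N; simpl. reflexivity. rewrite IHN. unfold Cadd. simpl. reflexivity. Qed.

Lemma Csum_ext f g N : (forall i, (i < N)%nat -> f i = g i) -> Csum f N = Csum g N.
Proof. induction N; intros H; simpl; auto. rewrite IHN by (intros; apply H; lia). rewrite (H N) by lia. reflexivity. Qed.

Lemma Csum_zero f N : (forall i, (i < N)%nat -> f i = C0) -> Csum f N = C0.
Proof. induction N; intros H; simpl; auto. rewrite IHN by (intros; apply H; lia). rewrite (H N) by lia.
  unfold Cadd, C0, RtoC; simpl. f_equal; ring. Qed.

Lemma Csum_unique (c : nat -> bool) (f : nat -> Cx) N j0 :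
  (j0 < N)%nat -> c j0 = true -> (forall j, (j < N)%nat -> c j = true -> j = j0) ->
  Csum (fun j => if c j then f j else C0) N = f j0.
Proof.
  induction N; intros H0 Hc Hu; [lia|]. simpl.
  destruct (Nat.eq_dec j0 N) as [->|Hne].
  - rewrite Hc. rewrite Csum_zero. unfold Cadd, C0, RtoC; destruct (f N); simpl; f_equal; ring.
    intros i Hi. destruct (c i) eqn:E; auto. assert (i = N) by (apply Hu; auto; lia). lia.
  - rewrite IHN; try lia; auto. destruct (c N) eqn:E.
    assert (N = j0) by (apply Hu; auto). lia.
    unfold Cadd, C0, RtoC; destruct (f j0); simpl; f_equal; ring.
Qed.

Lemma Csum_none (c : nat -> bool) (f : nat -> Cx) N :
  (forall j, (j < N)%nat -> c j = false) -> Csum (fun j => if c j then f j else C0) N = C0.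
Proof. intros H. apply Csum_zero. intros i Hi. rewrite H; auto. Qed.

Lemma Cnorm2_Csum_atmost1 (c : nat -> bool) (g : nat -> Cx) N :
  (forall x y, (x < N)%nat -> (y < N)%nat -> c x = true -> c y = true -> x = y) ->
  Cnorm2 (Csum (fun x => if c x then g x else C0) N) =
  Rsum (fun x => if c x then Cnorm2 (g x) else 0) N.
Proof.
  intros Hu. destruct (classic (exists x0, (x0 < N)%nat /\ c x0 = true)) as [[x0 [H1 H2]]|Hn].
  - rewrite (Csum_unique c g N x0); auto; try (intros; apply Hu; auto; fail).
    rewrite (Rsum_unique c (fun x => Cnorm2 (g x)) N x0); auto; try (intros; apply Hu; auto; fail).
  - rewrite Csum_none, Rsum_none. unfold Cnorm2, C0, RtoC; simpl; ring.
    intros j Hj; destruct (c j) eqn:E; auto; exfalso; apply Hn; eauto.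
    intros j Hj; destruct (c j) eqn:E; auto; exfalso; apply Hn; eauto.
Qed.

Lemma tb_lo x n : (x < 2 ^ n)%nat -> Nat.testbit x n = false.
Proof. intros H. apply (Nat.testbit_unique x n false x 0); auto; simpl; lia. Qed.

Lemma tb_hi x n : (x < 2 ^ n)%nat -> Nat.testbit (2 ^ n + x) n = true.
Proof. intros H. apply (Nat.testbit_unique _ n true x 0); auto; simpl; lia. Qed.

Lemma tb_low x n j : (j < n)%nat -> Nat.testbit (2 ^ n + x) j = Nat.testbit x j.
Proof. intros H. rewrite <- (Nat.mod_pow2_bits_low (2^n + x) n j) by auto.
  rewrite <- (Nat.mod_pow2_bits_low x n j) by auto. f_equal.
  replace (2^n + x)%nat with (x + 1 * 2^n)%nat by lia. rewrite Nat.Div0.mod_add. reflexivity. Qed.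

Definition agree n x y := forall j, (j < n)%nat -> Nat.testbit x j = Nat.testbit y j.

Lemma agree_S n x y : agree (S n) x y -> agree n x y /\ Nat.testbit x n = Nat.testbit y n.
Proof. intros H; split. intros j Hj; apply H; lia. apply H; lia. Qed.

Lemma agree_hi n x : agree n (2 ^ n + x) x.
Proof. intros j Hj. apply tb_low; auto. Qed.

Fixpoint pop (n x : nat) : nat :=
  match n with O => O | S n' => ((if Nat.testbit x n' then 1 else 0) + pop n' x)%nat end.

Fixpoint binom (n k : nat) : nat :=
  match n with
  | O => match k with O => 1%nat | S _ => O end
  | S n' => (binom n' k + match k with O => O | S k' => binom n' k' end)%nat
  end.

Fixpoint rank (n x : nat) : nat :=
  match n with O => O
  | S n' => if Nat.testbit x n' then (binom n' (S (pop n' x)) + rank n' x)%nat else rank n' x end.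

Lemma pop_agree n x y : agree n x y -> pop n x = pop n y.
Proof. induction n; intros H; simpl; auto. destruct (agree_S _ _ _ H) as [H1 H2]. rewrite H2, (IHn H1). auto. Qed.

Lemma rank_agree n x y : agree n x y -> rank n x = rank n y.
Proof. induction n; intros H; simpl; auto. destruct (agree_S _ _ _ H) as [H1 H2].
  rewrite H2, (IHn H1), (pop_agree _ _ _ H1). auto. Qed.

Lemma pop_le n x : (pop n x <= n)%nat.
Proof. induction n; simpl; auto. destruct (Nat.testbit x n); lia. Qed.

Lemma binom_0 n k : (n < k)%nat -> binom n k = O.
Proof. revert k; induction n; intros k H; simpl. destruct k; lia.
  destruct k; [lia|]. rewrite !IHn by lia. auto. Qed.

Lemma binom_pos n k : (k <= n)%nat -> (1 <= binom n k)%nat.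
Proof. revert k; induction n; intros k H; simpl. destruct k; lia.
  destruct (Nat.le_gt_cases k n) as [H1|H1]. pose proof (IHn k H1). lia.
  assert (k = S n) by lia. subst. pose proof (IHn n (le_n n)). lia. Qed.

Lemma binom_le n k : (binom n k <= 2 ^ n)%nat.
Proof. revert k; induction n; intros k; simpl. destruct k; lia.
  destruct k. specialize (IHn 0%nat). lia. pose proof (IHn (S k)). pose proof (IHn k). lia. Qed.

Lemma pow2_S n : (2 ^ S n = 2 ^ n + 2 ^ n)%nat.
Proof. simpl. lia. Qed.

Lemma lt_pow2_S x n : (x < 2 ^ S n)%nat -> (x < 2 ^ n)%nat \/ exists x', (x' < 2 ^ n)%nat /\ x = (2 ^ n + x')%nat.
Proof. rewrite pow2_S. intros H. destruct (Nat.lt_ge_cases x (2^n)). auto. right. exists (x - 2^n)%nat. lia. Qed.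

Lemma pop_hi n x : (x < 2 ^ n)%nat -> pop (S n) (2 ^ n + x) = S (pop n x).
Proof. intros H. simpl. rewrite tb_hi by auto. rewrite (pop_agree _ _ _ (agree_hi n x)). lia. Qed.
Lemma pop_lo n x : (x < 2 ^ n)%nat -> pop (S n) x = pop n x.
Proof. intros H. simpl. rewrite tb_lo by auto. lia. Qed.
Lemma rank_hi n x : (x < 2 ^ n)%nat -> rank (S n) (2 ^ n + x) = (binom n (S (pop n x)) + rank n x)%nat.
Proof. intros H. simpl. rewrite tb_hi by auto. rewrite (pop_agree _ _ _ (agree_hi n x)), (rank_agree _ _ _ (agree_hi n x)). auto. Qed.
Lemma rank_lo n x : (x < 2 ^ n)%nat -> rank (S n) x = rank n x.
Proof. intros H. simpl. rewrite tb_lo by auto. auto. Qed.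

Lemma rank_lt n x : (rank n x < binom n (pop n x))%nat.
Proof. induction n; simpl. lia. destruct (Nat.testbit x n); simpl.
  pose proof (IHn). lia. pose proof IHn. lia. Qed.

Lemma rank_inj n x y : (x < 2 ^ n)%nat -> (y < 2 ^ n)%nat -> pop n x = pop n y -> rank n x = rank n y -> x = y.
Proof.
  revert x y; induction n; intros x y Hx Hy Hp Hr. simpl in *. lia.
  destruct (lt_pow2_S _ _ Hx) as [Hx'|[x' [Hx' ->]]]; destruct (lt_pow2_S _ _ Hy) as [Hy'|[y' [Hy' ->]]].
  - rewrite (pop_lo n x), (pop_lo n y) in Hp by auto. rewrite (rank_lo n x), (rank_lo n y) in Hr by auto. apply IHn; auto.
  - rewrite (pop_lo n x), (pop_hi n y') in Hp by auto. rewrite (rank_lo n x), (rank_hi n y') in Hr by auto.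
    pose proof (rank_lt n x) as H. rewrite Hp in H. lia.
  - rewrite (pop_lo n y), (pop_hi n x') in Hp by auto. rewrite (rank_lo n y), (rank_hi n x') in Hr by auto.
    pose proof (rank_lt n y) as H. rewrite <- Hp in H. lia.
  - rewrite (pop_hi n x'), (pop_hi n y') in Hp by auto. rewrite (rank_hi n x'), (rank_hi n y') in Hr by auto.
    injection Hp as Hp. rewrite Hp in Hr. f_equal. apply IHn; auto. lia.
Qed.

Lemma rank_surj n k r : (r < binom n k)%nat -> exists x, (x < 2 ^ n)%nat /\ pop n x = k /\ rank n x = r.
Proof.
  revert k r; induction n; intros k r H. simpl in *. destruct k; [|lia]. exists O. simpl; lia.
  simpl in H. destruct (Nat.lt_ge_cases r (binom n k)) as [H1|H1].
  - destruct (IHn k r H1) as [x [Hx [Hp Hr]]]. exists x. rewrite pop_lo, rank_lo by auto. rewrite pow2_S. lia.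
  - destruct k. lia. destruct (IHn k (r - binom n (S k))%nat) as [x [Hx [Hp Hr]]]. lia.
    exists (2^n + x)%nat. rewrite pop_hi, rank_hi by auto. rewrite pow2_S. subst. lia.
Qed.

Lemma class_sum n k (F : nat -> R) :
  Rsum (fun x => if Nat.eqb (pop n x) k then F (rank n x) else 0) (2 ^ n) = Rsum F (binom n k).
Proof.
  revert k F; induction n; intros k F.
  - simpl. destruct k; simpl; ring.
  - rewrite pow2_S, Rsum_split.
    rewrite (Rsum_ext _ (fun x => if Nat.eqb (pop n x) k then F (rank n x) else 0) (2^n)).
    2:{ intros i Hi. rewrite pop_lo, rank_lo by auto. auto. }
    rewrite IHn.
    rewrite (Rsum_ext _ (fun x => if Nat.eqb (S (pop n x)) k then F (binom n (S (pop n x)) + rank n x)%nat else 0) (2^n)).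
    2:{ intros i Hi. rewrite pop_hi, rank_hi by auto. auto. }
    simpl binom. destruct k.
    + rewrite (Rsum_zero _ (2^n)). rewrite Nat.add_0_r. ring. intros; simpl; auto.
    + rewrite (Rsum_ext _ (fun x => if Nat.eqb (pop n x) k then F (binom n (S k) + rank n x)%nat else 0) (2^n)).
      2:{ intros i Hi. simpl Nat.eqb. destruct (Nat.eqb (pop n i) k) eqn:E; auto. apply Nat.eqb_eq in E. rewrite E. auto. }
      rewrite (IHn k (fun r => F (binom n (S k) + r)%nat)). rewrite Rsum_split. auto.
Qed.

Fixpoint bf (T C r : nat) : nat :=
  match T with O => O
  | S T' => if Nat.leb (2 ^ T) C then (if Nat.ltb r (2 ^ T) then T else bf T' (C - 2 ^ T) (r - 2 ^ T))
            else bf T' C r end.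
Fixpoint ps (T C r : nat) : nat :=
  match T with O => O
  | S T' => if Nat.leb (2 ^ T) C then (if Nat.ltb r (2 ^ T) then r else ps T' (C - 2 ^ T) (r - 2 ^ T))
            else ps T' C r end.

Lemma bf_S T C r : bf (S T) C r = if Nat.leb (2 ^ S T) C then (if Nat.ltb r (2 ^ S T) then S T else bf T (C - 2 ^ S T) (r - 2 ^ S T)) else bf T C r.
Proof. reflexivity. Qed.
Lemma ps_S T C r : ps (S T) C r = if Nat.leb (2 ^ S T) C then (if Nat.ltb r (2 ^ S T) then r else ps T (C - 2 ^ S T) (r - 2 ^ S T)) else ps T C r.
Proof. reflexivity. Qed.

Lemma bf_le T C r : (bf T C r <= T)%nat.
Proof. revert C r; induction T; intros C r; [simpl; lia|]. rewrite bf_S.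
  destruct (Nat.leb _ C); [destruct (Nat.ltb r _)|]; try lia;
  match goal with |- (bf T ?a ?b <= _)%nat => pose proof (IHT a b); lia end. Qed.

Lemma ps_lt T C r : (r < C)%nat -> (C < 2 ^ S T)%nat -> (ps T C r < 2 ^ bf T C r)%nat.
Proof. revert C r; induction T; intros C r H1 H2; [simpl; lia|]. rewrite ps_S, bf_S.
  destruct (Nat.leb (2 ^ S T) C) eqn:E1; [destruct (Nat.ltb r (2 ^ S T)) eqn:E2|].
  - apply Nat.ltb_lt in E2. auto.
  - apply Nat.leb_le in E1. apply Nat.ltb_ge in E2. apply IHT. lia. rewrite pow2_S in H2. lia.
  - apply Nat.leb_gt in E1. apply IHT; auto.
Qed.

Lemma bf_inj T C r1 r2 : (r1 < C)%nat -> (r2 < C)%nat -> (C < 2 ^ S T)%nat ->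
  bf T C r1 = bf T C r2 -> ps T C r1 = ps T C r2 -> r1 = r2.
Proof. revert C r1 r2; induction T; intros C r1 r2 H1 H2 H3 Hb Hp.
  - simpl in H3. lia.
  - rewrite !ps_S in Hp. rewrite !bf_S in Hb. revert Hb Hp.
    destruct (Nat.leb_spec (2 ^ S T) C) as [E1|E1].
    + destruct (Nat.ltb_spec r1 (2 ^ S T)) as [E2|E2]; destruct (Nat.ltb_spec r2 (2 ^ S T)) as [E3|E3]; intros Hb Hp.
      * lia.
      * pose proof (bf_le T (C - 2 ^ S T) (r2 - 2 ^ S T)). lia.
      * pose proof (bf_le T (C - 2 ^ S T) (r1 - 2 ^ S T)). lia.
      * assert (r1 - 2 ^ S T = r2 - 2 ^ S T)%nat. apply (IHT (C - 2 ^ S T)%nat); auto; try lia. rewrite pow2_S in H3; lia. lia.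
    + intros Hb Hp. apply (IHT C); auto.
Qed.

Lemma bf_surj T C r0 q : (r0 < C)%nat -> (C < 2 ^ S T)%nat -> (q < 2 ^ bf T C r0)%nat ->
  exists r, (r < C)%nat /\ bf T C r = bf T C r0 /\ ps T C r = q.
Proof. revert C r0 q; induction T; intros C r0 q H1 H2 H3.
  - simpl in *. exists r0. lia.
  - rewrite bf_S in H3. destruct (Nat.leb_spec (2 ^ S T) C) as [E1|E1].
    + destruct (Nat.ltb_spec r0 (2 ^ S T)) as [E2|E2].
      * exists q. rewrite bf_S, ps_S, bf_S.
        destruct (Nat.leb_spec (2 ^ S T) C); [|lia].
        destruct (Nat.ltb_spec q (2 ^ S T)); [|lia]. destruct (Nat.ltb_spec r0 (2 ^ S T)); [|lia]. lia.
      * destruct (IHT (C - 2 ^ S T)%nat (r0 - 2 ^ S T)%nat q) as [r [Ha [Hb Hc]]]; auto; try lia.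
        rewrite pow2_S in H2. lia.
        exists (2 ^ S T + r)%nat. rewrite bf_S, ps_S, bf_S.
        destruct (Nat.leb_spec (2 ^ S T) C); [|lia].
        destruct (Nat.ltb_spec (2 ^ S T + r) (2 ^ S T)); [lia|]. destruct (Nat.ltb_spec r0 (2 ^ S T)); [lia|].
        replace (2 ^ S T + r - 2 ^ S T)%nat with r by lia. split; [lia|auto].
    + destruct (IHT C r0 q) as [r [Ha [Hb Hc]]]; auto.
      exists r. rewrite bf_S, ps_S, bf_S. destruct (Nat.leb_spec (2 ^ S T) C); [lia|]. auto.
Qed.

Definition log2' := log2.

Lemma ln_le_sub1 x : 0 < x -> ln x <= x - 1.
Proof. intros H. pose proof (exp_ineq1_le (ln x)). rewrite exp_ln in H0 by auto. lra. Qed.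

Lemma ln2_pos : 0 < ln 2.
Proof. pose proof ln_lt_2. lra. Qed.

Lemma INR_pow2 T : INR (2 ^ T) = 2 ^ T.
Proof. rewrite pow_INR. f_equal. Qed.

Lemma key_ineq T c : 0 < c -> c <= 2 ^ T -> c * (INR T + 1 - log2 c) <= 2 * 2 ^ T.
Proof.
  intros Hc HX. set (X := 2 ^ T) in *. assert (HX0 : 0 < X) by (apply pow_lt; lra).
  pose proof (ln_le_sub1 (X / c)) as H. assert (0 < X / c) by (apply Rdiv_lt_0_compat; auto).
  specialize (H H0). unfold Rdiv in H. rewrite ln_mult, ln_Rinv in H by (auto; apply Rinv_0_lt_compat; auto).
  unfold X in H at 1. rewrite ln_pow in H by lra.
  assert (H1 : c * (INR T * ln 2 - ln c) <= X - c).
  { replace (X - c) with (c * (X * / c - 1)) by (field; lra). apply Rmult_le_compat_l; lra. }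
  unfold log2. pose proof ln_lt_2. pose proof ln2_pos.
  assert (Hq : c * (INR T - ln c / ln 2) <= (X - c) / ln 2).
  { replace (c * (INR T - ln c / ln 2)) with (c * (INR T * ln 2 - ln c) / ln 2) by (field; lra).
    unfold Rdiv. apply Rmult_le_compat_r; [left; apply Rinv_0_lt_compat; auto| auto]. }
  assert ((X - c) / ln 2 <= 2 * (X - c)).
  { unfold Rdiv. assert (/ ln 2 < 2). { assert (Hi : / ln 2 < / / 2) by (apply Rinv_lt_contravar; nra). rewrite Rinv_inv in Hi. exact Hi. }
    assert (0 <= X - c) by lra. nra. }
  nra.
Qed.

Lemma bf_sum T C : (1 <= C)%nat -> (C < 2 ^ S T)%nat ->
  INR C * (log2 (INR C) - 3) <= Rsum (fun r => INR (bf T C r)) C.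
Proof.
  revert C; induction T; intros C H1 H2.
  - simpl in H2. assert (C = 1%nat) by lia. subst. simpl. unfold log2. rewrite ln_1. unfold Rdiv. lra.
  - destruct (Nat.leb (2 ^ S T) C) eqn:E1.
    + apply Nat.leb_le in E1. replace (Rsum (fun r => INR (bf (S T) C r)) C) with (Rsum (fun r => INR (bf (S T) C r)) (2 ^ S T + (C - 2 ^ S T))) by (f_equal; lia).
      rewrite Rsum_split.
      rewrite (Rsum_ext _ (fun _ => INR (S T))).
      2:{ intros i Hi. rewrite bf_S. rewrite (proj2 (Nat.leb_le _ _) E1). rewrite (proj2 (Nat.ltb_lt _ _) Hi). auto. }
      rewrite Rsum_const.
      rewrite (Rsum_ext _ (fun r => INR (bf T (C - 2 ^ S T) r))).
      2:{ intros i Hi. rewrite bf_S. rewrite (proj2 (Nat.leb_le _ _) E1).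
          assert (Nat.ltb (2 ^ S T + i) (2 ^ S T) = false) by (apply Nat.ltb_ge; lia). rewrite H.
          replace (2 ^ S T + i - 2 ^ S T)%nat with i by lia. auto. }
      set (C' := (C - 2 ^ S T)%nat). assert (HC : C = (2 ^ S T + C')%nat) by (unfold C'; lia).
      assert (HC' : (C' < 2 ^ S T)%nat) by (unfold C'; rewrite pow2_S in H2; lia).
      rewrite HC. rewrite plus_INR, INR_pow2. set (X := 2 ^ S T).
      assert (HX : 0 < X) by (apply pow_lt; lra).
      assert (HcX : INR C' < X) by (unfold X; rewrite <- INR_pow2; apply lt_INR; auto).
      destruct (Nat.eq_dec C' 0) as [E0|E0].
      * rewrite E0. change (INR 0) with 0. simpl Rsum. rewrite !Rplus_0_r. unfold X, log2. rewrite ln_pow by lra.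
        pose proof ln2_pos. replace (INR (S T) * ln 2 / ln 2) with (INR (S T)) by (field; lra). pose proof (pow_lt 2 (S T) ltac:(lra)). nra.
      * assert (Hc : 1 <= INR C') by (apply (le_INR 1); lia).
        pose proof (IHT C' ltac:(lia) HC') as IH.
        assert (Hlog : log2 (X + INR C') < INR (S T) + 1).
        { unfold log2. pose proof ln2_pos. apply (Rmult_lt_reg_r (ln 2)); auto.
          replace (ln (X + INR C') / ln 2 * ln 2) with (ln (X + INR C')) by (field; lra).
          replace ((INR (S T) + 1) * ln 2) with (ln (2 ^ S (S T))).
          apply ln_increasing. lra. replace (2 ^ S (S T)) with (2 * X) by (unfold X; simpl; ring). lra.
          rewrite ln_pow by lra. rewrite S_INR. ring. }
        pose proof (key_ineq (S T) (INR C') ltac:(lra) ltac:(unfold X in HcX; lra)).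
        fold X in H.
        assert ((X + INR C') * (log2 (X + INR C') - 3) <= (X + INR C') * (INR (S T) - 2)).
        { apply Rmult_le_compat_l; lra. }
        nra.
    + apply Nat.leb_gt in E1. rewrite (Rsum_ext _ (fun r => INR (bf T C r))).
      apply IHT; auto.
      intros i Hi. rewrite bf_S. rewrite (proj2 (Nat.leb_gt _ _) E1). auto.
Qed.

Lemma Cnorm2_mul z w : Cnorm2 (Cmul z w) = Cnorm2 z * Cnorm2 w.
Proof. destruct z, w; unfold Cnorm2, Cmul; simpl; ring. Qed.

Lemma Cnorm2_nonneg z : 0 <= Cnorm2 z.
Proof. destruct z; unfold Cnorm2; simpl; nra. Qed.

Lemma psi_agree a b n x y : agree n x y -> psi_tensor a b n x = psi_tensor a b n y.
Proof. induction n; intros H; simpl; auto. destruct (agree_S _ _ _ H) as [H1 H2]. rewrite H2, (IHn H1). auto. Qed.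

Lemma psi_lo a b n x : (x < 2 ^ n)%nat -> psi_tensor a b (S n) x = Cmul a (psi_tensor a b n x).
Proof. intros H. simpl. rewrite tb_lo by auto. auto. Qed.

Lemma psi_hi a b n x : (x < 2 ^ n)%nat -> psi_tensor a b (S n) (2 ^ n + x) = Cmul b (psi_tensor a b n x).
Proof. intros H. simpl. rewrite tb_hi by auto. rewrite (psi_agree a b n _ _ (agree_hi n x)). auto. Qed.

Lemma w_formula a b n x :
  Cnorm2 (psi_tensor a b n x) = Cnorm2 a ^ (n - pop n x) * Cnorm2 b ^ (pop n x).
Proof. induction n; simpl; [unfold Cnorm2, Defs.C1, RtoC; simpl; ring|].
  rewrite Cnorm2_mul, IHn. pose proof (pop_le n x). destruct (Nat.testbit x n); simpl.
  ring. replace (match pop n x with O => S n | S l => (n - l)%nat end) with (S (n - pop n x)) by (destruct (pop n x); lia). simpl. ring. Qed.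

Lemma sum_w a b n : Cnorm2 a + Cnorm2 b = 1 ->
  Rsum (fun x => Cnorm2 (psi_tensor a b n x)) (2 ^ n) = 1.
Proof. intros Hn. induction n. simpl. unfold Cnorm2, Defs.C1, RtoC; simpl; ring.
  rewrite pow2_S, Rsum_split.
  rewrite (Rsum_ext _ (fun x => Cnorm2 a * Cnorm2 (psi_tensor a b n x))).
  2:{ intros; rewrite psi_lo, Cnorm2_mul; auto. }
  rewrite (Rsum_ext (fun i => Cnorm2 (psi_tensor a b (S n) (2 ^ n + i))) (fun x => Cnorm2 b * Cnorm2 (psi_tensor a b n x))).
  2:{ intros; rewrite psi_hi, Cnorm2_mul; auto. }
  rewrite !Rsum_scal, IHn. lra. Qed.

Lemma nxl_0 : negxlogx 0 = 0.
Proof. unfold negxlogx. destruct (Rle_dec 0 0); auto; lra. Qed.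

Lemma nxl_pos x : 0 < x -> negxlogx x = - x * log2 x.
Proof. intros H. unfold negxlogx. destruct (Rle_dec x 0); auto; lra. Qed.

Lemma nxl_mul a b : 0 <= a -> 0 <= b -> negxlogx (a * b) = a * negxlogx b + b * negxlogx a.
Proof. intros Ha Hb. destruct Ha as [Ha|<-]; [|rewrite Rmult_0_l, nxl_0; ring].
  destruct Hb as [Hb|<-]; [|rewrite Rmult_0_r, nxl_0; ring].
  rewrite !nxl_pos by (auto; apply Rmult_lt_0_compat; auto). unfold log2. rewrite ln_mult by auto.
  field. apply Rgt_not_eq. apply ln2_pos. Qed.

Lemma sum_nxl a b n : Cnorm2 a + Cnorm2 b = 1 ->
  Rsum (fun x => negxlogx (Cnorm2 (psi_tensor a b n x))) (2 ^ n) = INR n * (negxlogx (Cnorm2 a) + negxlogx (Cnorm2 b)).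
Proof. intros Hn. induction n. simpl. unfold Cnorm2, Defs.C1, RtoC; simpl. replace (1*1+0*0) with 1 by ring.
  unfold negxlogx. destruct (Rle_dec 1 0). lra. unfold log2. rewrite ln_1. unfold Rdiv. ring.
  rewrite pow2_S, Rsum_split.
  pose proof (Cnorm2_nonneg a). pose proof (Cnorm2_nonneg b).
  rewrite (Rsum_ext _ (fun x => Cnorm2 a * negxlogx (Cnorm2 (psi_tensor a b n x)) + Cnorm2 (psi_tensor a b n x) * negxlogx (Cnorm2 a))).
  2:{ intros; rewrite psi_lo, Cnorm2_mul, nxl_mul; auto. apply Cnorm2_nonneg. }
  rewrite (Rsum_ext (fun i => negxlogx (Cnorm2 (psi_tensor a b (S n) (2 ^ n + i)))) (fun x => Cnorm2 b * negxlogx (Cnorm2 (psi_tensor a b n x)) + Cnorm2 (psi_tensor a b n x) * negxlogx (Cnorm2 b))).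
  2:{ intros; rewrite psi_hi, Cnorm2_mul, nxl_mul; auto. apply Cnorm2_nonneg. }
  rewrite !Rsum_plus, !Rsum_scal.
  rewrite (Rsum_ext (fun x => Cnorm2 (psi_tensor a b n x) * negxlogx (Cnorm2 a)) (fun x => negxlogx (Cnorm2 a) * Cnorm2 (psi_tensor a b n x))) by (intros; ring).
  rewrite (Rsum_ext (fun x => Cnorm2 (psi_tensor a b n x) * negxlogx (Cnorm2 b)) (fun x => negxlogx (Cnorm2 b) * Cnorm2 (psi_tensor a b n x))) by (intros; ring).
  rewrite !Rsum_scal, IHn, sum_w by auto. rewrite S_INR. nra. Qed.

Lemma nxl_binom c W : 1 <= c -> 0 <= W -> c * negxlogx W = negxlogx (c * W) + c * W * log2 c.
Proof. intros Hc HW. destruct HW as [HW|<-]; [|rewrite Rmult_0_r, nxl_0; ring].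
  rewrite !nxl_pos by (auto; apply Rmult_lt_0_compat; lra). unfold log2. rewrite ln_mult by lra.
  field. apply Rgt_not_eq. apply ln2_pos. Qed.

Lemma nxl_term P N : (1 <= N)%nat -> 0 <= P -> negxlogx P <= P * log2 (INR N) + (/ INR N - P) / ln 2.
Proof. intros HN HP. pose proof ln2_pos. assert (HNr : 1 <= INR N) by (apply (le_INR 1); auto).
  destruct HP as [HP|<-].
  - rewrite nxl_pos by auto. unfold log2.
    pose proof (ln_le_sub1 (/ (INR N * P))). assert (0 < / (INR N * P)) by (apply Rinv_0_lt_compat; nra).
    specialize (H0 H1). rewrite ln_Rinv, ln_mult in H0 by nra.
    assert (- P * ln P <= P * ln (INR N) + (/ INR N - P)).
    { assert (P * (- (ln (INR N) + ln P)) <= P * (/ (INR N * P) - 1)) by (apply Rmult_le_compat_l; lra).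
      replace (P * (/ (INR N * P) - 1)) with (/ INR N - P) in H2 by (field; lra). lra. }
    replace (- P * (ln P / ln 2)) with ((- P * ln P) / ln 2) by (field; lra).
    replace (P * (ln (INR N) / ln 2) + (/ INR N - P) / ln 2) with ((P * ln (INR N) + (/ INR N - P)) / ln 2) by (field; lra).
    unfold Rdiv. apply Rmult_le_compat_r; [left; apply Rinv_0_lt_compat; auto | auto].
  - rewrite nxl_0. assert (0 < / INR N) by (apply Rinv_0_lt_compat; lra).
    assert (0 <= / INR N / ln 2) by (unfold Rdiv; apply Rmult_le_pos; [lra| left; apply Rinv_0_lt_compat; auto]).
    lra.
Qed.

Lemma nxl_sum_le (P : nat -> R) N : (1 <= N)%nat -> (forall k, (k < N)%nat -> 0 <= P k) -> Rsum P N = 1 ->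
  Rsum (fun k => negxlogx (P k)) N <= log2 (INR N).
Proof. intros HN HP Hs. eapply Rle_trans.
  apply (Rsum_le _ (fun k => P k * log2 (INR N) + (/ INR N - P k) / ln 2)). intros; apply nxl_term; auto.
  rewrite Rsum_plus. unfold Rdiv.
  rewrite (Rsum_ext (fun k => P k * log2 (INR N)) (fun k => log2 (INR N) * P k)) by (intros; ring).
  rewrite (Rsum_ext (fun k => (/ INR N - P k) * / ln 2) (fun k => / ln 2 * (/ INR N - P k))) by (intros; ring).
  rewrite !Rsum_scal, Rsum_minus, Rsum_const, Hs.
  assert (HNr : 1 <= INR N) by (apply (le_INR 1); auto).
  replace (INR N * / INR N) with 1 by (field; lra). lra. Qed.
Local Open Scope bool_scope.
Local Open Scope R_scope.

Definition Cc n x := binom n (pop n x).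
Definition bx n x := bf n (Cc n x) (rank n x).
Definition px n x := ps n (Cc n x) (rank n x).
Definition row n x := (px n x * 2 ^ (n - bx n x))%nat.
Definition grp n j x : bool :=
  Nat.ltb x (2 ^ n) && Nat.eqb (pop n x) (j / S n) && Nat.eqb (bx n x) (j mod S n).
Definition ph (z : Cx) : Cx :=
  if Req_dec_T (Cnorm2 z) 0 then Defs.C1 else Cmul (RtoC (/ sqrt (Cnorm2 z))) (Cconj z).
Definition Kr a b n j : Mat := fun i x =>
  if grp n j x && Nat.eqb i (row n x) then ph (psi_tensor a b n x) else C0.

Lemma Cc_bounds n x : (1 <= Cc n x)%nat /\ (Cc n x < 2 ^ S n)%nat.
Proof. unfold Cc. split. apply binom_pos, pop_le. pose proof (binom_le n (pop n x)). rewrite pow2_S.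
  pose proof (Nat.pow_nonzero 2 n). lia. Qed.

Lemma bx_le n x : (bx n x <= n)%nat.
Proof. apply bf_le. Qed.

Lemma px_lt n x : (px n x < 2 ^ bx n x)%nat.
Proof. apply ps_lt. apply rank_lt. apply Cc_bounds. Qed.

Lemma row_lt n x : (row n x < 2 ^ n)%nat.
Proof. unfold row. pose proof (px_lt n x). pose proof (bx_le n x).
  replace (2 ^ n)%nat with (2 ^ bx n x * 2 ^ (n - bx n x))%nat by (rewrite <- Nat.pow_add_r; f_equal; lia).
  apply Nat.mul_lt_mono_pos_r; auto. pose proof (Nat.pow_nonzero 2 (n - bx n x)). lia. Qed.

Lemma grp_spec n j x : grp n j x = true -> (x < 2 ^ n)%nat /\ pop n x = (j / S n)%nat /\ bx n x = (j mod S n)%nat.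
Proof. unfold grp. intros H. apply andb_prop in H as [H H3]. apply andb_prop in H as [H1 H2].
  apply Nat.ltb_lt in H1. apply Nat.eqb_eq in H2. apply Nat.eqb_eq in H3. auto. Qed.

Definition jx n x := (pop n x * S n + bx n x)%nat.

Lemma jx_grp n x : (x < 2 ^ n)%nat -> grp n (jx n x) x = true.
Proof. intros H. unfold grp, jx. pose proof (bx_le n x).
  rewrite Nat.div_add_l by lia. rewrite Nat.div_small by lia.
  replace ((pop n x * S n + bx n x) mod S n)%nat with (bx n x).
  2:{ rewrite (Nat.add_comm (pop n x * S n)), Nat.Div0.mod_add, Nat.mod_small; lia. }
  apply andb_true_intro; split; [apply andb_true_intro; split|].
  apply Nat.ltb_lt; auto. apply Nat.eqb_eq; lia. apply Nat.eqb_eq; lia. Qed.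

Lemma jx_lt n x : (jx n x < S n * S n)%nat.
Proof. unfold jx. pose proof (bx_le n x). pose proof (pop_le n x). nia. Qed.

Lemma grp_jx n j x : grp n j x = true -> j = jx n x.
Proof. intros H. apply grp_spec in H as [_ [H1 H2]]. unfold jx. rewrite H1, H2.
  pose proof (Nat.div_mod_eq j (S n)). lia. Qed.

Lemma grp_inj n j x y : grp n j x = true -> grp n j y = true -> row n x = row n y -> x = y.
Proof. intros Hx Hy Hr. apply grp_spec in Hx as [Hx [Hx1 Hx2]]. apply grp_spec in Hy as [Hy [Hy1 Hy2]].
  assert (Hp : pop n x = pop n y) by lia. assert (Hb : bx n x = bx n y) by lia.
  unfold row in Hr. rewrite Hb in Hr. apply Nat.mul_cancel_r in Hr; [|apply Nat.pow_nonzero; lia].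
  apply rank_inj with n; auto.
  unfold px, bx, Cc in *. rewrite Hp in *. apply (bf_inj n (binom n (pop n y))); auto.
  rewrite <- Hp; apply rank_lt. apply rank_lt. pose proof (Cc_bounds n y). unfold Cc in H. lia. Qed.

Lemma ph_mul z : Cmul (ph z) z = RtoC (sqrt (Cnorm2 z)).
Proof. unfold ph. destruct (Req_dec_T (Cnorm2 z) 0) as [E|E].
  - rewrite E, sqrt_0. destruct z as [u v]. unfold Cnorm2 in E; simpl in E.
    assert (u = 0) by nra. assert (v = 0) by nra. subst. unfold Cmul, Defs.C1, RtoC; simpl. f_equal; ring.
  - pose proof (Cnorm2_nonneg z). assert (0 < Cnorm2 z) by lra.
    pose proof (sqrt_lt_R0 _ H0). pose proof (sqrt_sqrt _ H).
    destruct z as [u v]. unfold Cmul, Cconj, RtoC, Cnorm2 in *; simpl in *. f_equal.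
    + apply (Rmult_eq_reg_l (sqrt (u * u + v * v))); [|lra]. field_simplify; [|lra]. nra.
    + field. lra.
Qed.

Lemma ph_norm z : Cmul (Cconj (ph z)) (ph z) = Defs.C1.
Proof. unfold ph. destruct (Req_dec_T (Cnorm2 z) 0) as [E|E].
  - unfold Cmul, Cconj, Defs.C1, RtoC; simpl. f_equal; ring.
  - pose proof (Cnorm2_nonneg z). assert (0 < Cnorm2 z) by lra.
    pose proof (sqrt_lt_R0 _ H0). pose proof (sqrt_sqrt _ H).
    destruct z as [u v]. unfold Cmul, Cconj, Defs.C1, RtoC, Cnorm2 in *; simpl in *.
    set (s := sqrt (u * u + v * v)) in *. f_equal.
    + transitivity ((u * u + v * v) / (s * s)). field. lra. rewrite H2. field. lra.
    + field. lra.
Qed.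

Lemma Cmul_C0_l z : Cmul C0 z = C0.
Proof. destruct z; unfold Cmul, C0, RtoC; simpl; f_equal; ring. Qed.
Lemma Cmul_C0_r z : Cmul z C0 = C0.
Proof. destruct z; unfold Cmul, C0, RtoC; simpl; f_equal; ring. Qed.
Lemma Cconj_C0 : Cconj C0 = C0.
Proof. unfold Cconj, C0, RtoC; simpl; f_equal; ring. Qed.

Lemma Csum_single f N y : (y < N)%nat -> (forall x, (x < N)%nat -> x <> y -> f x = C0) -> Csum f N = f y.
Proof. intros Hy H. rewrite (Csum_ext f (fun x => if Nat.eqb x y then f y else C0)).
  apply (Csum_unique (fun x => Nat.eqb x y) (fun _ => f y) N y); auto. apply Nat.eqb_refl.
  intros j _ Hj; apply Nat.eqb_eq; auto.
  intros i Hi. destruct (Nat.eqb_spec i y). subst; auto. apply H; auto. Qed.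

Lemma Kr_incoherent a b n : incoherent_op (2 ^ n) (S n * S n) (Kr a b n).
Proof.
  split.
  - intros x x' Hx Hx'. unfold Mmul, Madj.
    destruct (Nat.eqb_spec x x') as [<-|Hne].
    + rewrite (Csum_ext _ (fun j => if grp n j x then Defs.C1 else C0)).
      apply (Csum_unique (fun j => grp n j x) (fun _ => Defs.C1) _ (jx n x)).
      apply jx_lt. apply jx_grp; auto. intros j _ Hj; apply grp_jx; auto.
      intros j Hj. rewrite (Csum_ext _ (fun i => if grp n j x && Nat.eqb i (row n x) then Defs.C1 else C0)).
      destruct (grp n j x) eqn:Eg.
      * apply (Csum_unique (fun i => true && Nat.eqb i (row n x)) (fun _ => Defs.C1) _ (row n x)).
        apply row_lt. simpl; apply Nat.eqb_refl. intros i _ Hi. simpl in Hi. apply Nat.eqb_eq; auto.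
      * apply Csum_none. auto.
      * intros i Hi. unfold Kr. destruct (grp n j x && Nat.eqb i (row n x)). apply ph_norm.
        rewrite Cconj_C0, Cmul_C0_l. auto.
    + apply Csum_zero. intros j Hj. apply Csum_zero. intros i Hi. unfold Kr.
      destruct (grp n j x && Nat.eqb i (row n x)) eqn:E1; [|rewrite Cconj_C0, Cmul_C0_l; auto].
      destruct (grp n j x' && Nat.eqb i (row n x')) eqn:E2; [|rewrite Cmul_C0_r; auto].
      exfalso. apply andb_prop in E1 as [E1 E1']. apply andb_prop in E2 as [E2 E2'].
      apply Nat.eqb_eq in E1'. apply Nat.eqb_eq in E2'. apply Hne. apply (grp_inj n j); auto. lia.
  - intros j Hj delta Hd i i' Hi Hi' Hne. unfold Mmul at 1. apply Csum_zero. intros y Hy.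
    unfold Mmul. rewrite (Csum_single _ _ y Hy).
    2:{ intros x Hx Hxy. rewrite (Hd x y Hx Hy Hxy). apply Cmul_C0_r. }
    unfold Madj, Kr.
    destruct (grp n j y && Nat.eqb i (row n y)) eqn:E1; [|rewrite !Cmul_C0_l; auto].
    destruct (grp n j y && Nat.eqb i' (row n y)) eqn:E2; [|rewrite Cconj_C0, Cmul_C0_r; auto].
    exfalso. apply andb_prop in E1 as [_ E1]. apply andb_prop in E2 as [_ E2].
    apply Nat.eqb_eq in E1. apply Nat.eqb_eq in E2. lia.
Qed.
Local Open Scope bool_scope.
Local Open Scope R_scope.

Definition Wk a b n k := Cnorm2 a ^ (n - k) * Cnorm2 b ^ k.

Lemma Wk_nonneg a b n k : 0 <= Wk a b n k.
Proof. unfold Wk. apply Rmult_le_pos; apply pow_le; apply Cnorm2_nonneg. Qed.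

Lemma Mapply_Kr a b n j i : Mapply (2 ^ n) (Kr a b n j) (psi_tensor a b n) i =
  Csum (fun x => if grp n j x && Nat.eqb i (row n x) then RtoC (sqrt (Cnorm2 (psi_tensor a b n x))) else C0) (2 ^ n).
Proof. unfold Mapply. apply Csum_ext. intros x Hx. unfold Kr.
  destruct (grp n j x && Nat.eqb i (row n x)). apply ph_mul. apply Cmul_C0_l. Qed.

Lemma grp_w a b n j x : grp n j x = true -> Cnorm2 (psi_tensor a b n x) = Wk a b n (j / S n).
Proof. intros H. apply grp_spec in H as [_ [H _]]. rewrite w_formula, H. reflexivity. Qed.

Lemma row_mod n x : ((row n x) mod 2 ^ (n - bx n x) = 0)%nat.
Proof. unfold row. apply Nat.Div0.mod_mul. Qed.

Lemma Cnorm2_RtoC_sqrt w : 0 <= w -> Cnorm2 (RtoC (sqrt w)) = w.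
Proof. intros H. unfold Cnorm2, RtoC; simpl. rewrite sqrt_sqrt by auto. ring. Qed.

Lemma Kpsi_nonempty a b n j x0 i : grp n j x0 = true -> (i < 2 ^ n)%nat ->
  Mapply (2 ^ n) (Kr a b n j) (psi_tensor a b n) i =
  if Nat.eqb (i mod 2 ^ (n - j mod S n)) 0 then RtoC (sqrt (Wk a b n (j / S n))) else C0.
Proof.
  intros H0 Hi. rewrite Mapply_Kr. pose proof H0 as G0. apply grp_spec in G0 as [Hx0 [Hk Hb]].
  set (k := (j / S n)%nat) in *. set (bb := (j mod S n)%nat) in *.
  assert (Hbn : (bb <= n)%nat) by (rewrite <- Hb; apply bx_le).
  assert (HM : (2 ^ (n - bb) <> 0)%nat) by (apply Nat.pow_nonzero; lia).
  destruct (Nat.eqb_spec (i mod 2 ^ (n - bb)) 0) as [E|E].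
  - set (q := (i / 2 ^ (n - bb))%nat).
    assert (Hiq : i = (q * 2 ^ (n - bb))%nat) by (pose proof (Nat.div_mod_eq i (2 ^ (n - bb))); unfold q; lia).
    assert (Hq : (q < 2 ^ bb)%nat).
    { apply Nat.div_lt_upper_bound; auto. rewrite <- Nat.pow_add_r. replace (n - bb + bb)%nat with n by lia. auto. }
    assert (HC := Cc_bounds n x0). unfold Cc in HC. rewrite Hk in HC.
    assert (Hr0 : (rank n x0 < binom n k)%nat) by (rewrite <- Hk; apply rank_lt).
    destruct (bf_surj n (binom n k) (rank n x0) q Hr0 (proj2 HC)) as [r [Hr [Hbr Hpr]]].
    { unfold bx, Cc in Hb. rewrite Hk in Hb. rewrite Hb. auto. }
    destruct (rank_surj n k r Hr) as [x [Hx [Hpx Hrx]]].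
    assert (Gx : grp n j x = true).
    { unfold grp. apply andb_true_intro; split; [apply andb_true_intro; split|].
      apply Nat.ltb_lt; auto. apply Nat.eqb_eq; auto.
      apply Nat.eqb_eq. unfold bx, Cc. rewrite Hpx, Hrx, Hbr. unfold bx, Cc in Hb. rewrite Hk in Hb. auto. }
    assert (Rx : row n x = i).
    { unfold row, px, bx, Cc. rewrite Hpx, Hrx, Hbr, Hpr. unfold bx, Cc in Hb. rewrite Hk in Hb. rewrite Hb. auto. }
    rewrite (Csum_unique (fun y => grp n j y && Nat.eqb i (row n y)) (fun y => RtoC (sqrt (Cnorm2 (psi_tensor a b n y)))) _ x); auto.
    rewrite (grp_w a b n j x Gx). auto.
    rewrite Gx. simpl. apply Nat.eqb_eq. auto.
    intros y Hy Gy. apply andb_prop in Gy as [Gy Ry]. apply Nat.eqb_eq in Ry. apply (grp_inj n j); auto. lia.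
  - apply Csum_none. intros y Hy. destruct (grp n j y) eqn:Gy; auto. simpl.
    apply Nat.eqb_neq. intros ->. apply E. pose proof (row_mod n y). apply grp_spec in Gy as [_ [_ Gb]].
    rewrite Gb in H. auto.
Qed.

Lemma Kpsi_empty a b n j i : (forall x, (x < 2 ^ n)%nat -> grp n j x = false) ->
  Mapply (2 ^ n) (Kr a b n j) (psi_tensor a b n) i = C0.
Proof. intros H. rewrite Mapply_Kr. apply Csum_none. intros y Hy. rewrite H; auto. Qed.

Lemma count_mult M a c : (0 < M)%nat ->
  Rsum (fun i => if Nat.eqb (i mod M) 0 then c else 0) (a * M) = INR a * c.
Proof. intros HM. induction a. simpl. ring.
  replace (S a * M)%nat with (a * M + M)%nat by lia. rewrite Rsum_split, IHa.
  rewrite (Rsum_ext _ (fun i => if Nat.eqb i 0 then c else 0)).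
  rewrite (Rsum_unique (fun i => Nat.eqb i 0) (fun _ => c) M 0); auto. rewrite S_INR; ring.
  intros j _ Hj. apply Nat.eqb_eq; auto.
  intros i Hi. rewrite Nat.add_comm, Nat.Div0.mod_add, Nat.mod_small; auto. Qed.

Lemma p_nonempty a b n j x0 : grp n j x0 = true ->
  Vnorm2 (2 ^ n) (Mapply (2 ^ n) (Kr a b n j) (psi_tensor a b n)) = 2 ^ (j mod S n) * Wk a b n (j / S n).
Proof.
  intros H0. unfold Vnorm2. pose proof H0 as G0. apply grp_spec in G0 as [_ [_ Hb]].
  pose proof (bx_le n x0) as Hbn. rewrite Hb in Hbn.
  rewrite (Rsum_ext _ (fun i => if Nat.eqb (i mod 2 ^ (n - j mod S n)) 0 then Wk a b n (j / S n) else 0)).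
  2:{ intros i Hi. rewrite (Kpsi_nonempty a b n j x0 i H0 Hi).
      destruct (Nat.eqb _ 0). apply Cnorm2_RtoC_sqrt, Wk_nonneg. unfold Cnorm2, C0, RtoC; simpl; ring. }
  replace (2 ^ n)%nat with (2 ^ (j mod S n) * 2 ^ (n - j mod S n))%nat at 1 by (rewrite <- Nat.pow_add_r; f_equal; lia).
  rewrite count_mult. rewrite INR_pow2. auto. pose proof (Nat.pow_nonzero 2 (n - j mod S n)). lia.
Qed.

Lemma p_formula a b n j :
  Vnorm2 (2 ^ n) (Mapply (2 ^ n) (Kr a b n j) (psi_tensor a b n)) =
  Rsum (fun x => if grp n j x then Cnorm2 (psi_tensor a b n x) else 0) (2 ^ n).
Proof.
  unfold Vnorm2.
  rewrite (Rsum_ext _ (fun i => Rsum (fun x => if grp n j x && Nat.eqb i (row n x) then Cnorm2 (psi_tensor a b n x) else 0) (2 ^ n))).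
  2:{ intros i Hi. rewrite Mapply_Kr. rewrite Cnorm2_Csum_atmost1.
      apply Rsum_ext. intros x Hx. destruct (_ && _). apply Cnorm2_RtoC_sqrt, Cnorm2_nonneg. auto.
      intros x y Hx Hy Gx Gy. apply andb_prop in Gx as [Gx Rx]. apply andb_prop in Gy as [Gy Ry].
      apply Nat.eqb_eq in Rx. apply Nat.eqb_eq in Ry. apply (grp_inj n j); auto. lia. }
  rewrite Rsum_swap. apply Rsum_ext. intros x Hx. destruct (grp n j x) eqn:Gx.
  - apply (Rsum_unique (fun i => true && Nat.eqb i (row n x)) (fun _ => Cnorm2 (psi_tensor a b n x)) _ (row n x)).
    apply row_lt. simpl. apply Nat.eqb_refl. intros i _ Hi. simpl in Hi. apply Nat.eqb_eq; auto.
  - apply Rsum_none. auto.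
Qed.

Lemma expected_eq a b n :
  Rsum (fun j => Vnorm2 (2 ^ n) (Mapply (2 ^ n) (Kr a b n j) (psi_tensor a b n)) * INR (j mod S n)) (S n * S n) =
  Rsum (fun x => Cnorm2 (psi_tensor a b n x) * INR (bx n x)) (2 ^ n).
Proof.
  rewrite (Rsum_ext _ (fun j => Rsum (fun x => if grp n j x then Cnorm2 (psi_tensor a b n x) * INR (j mod S n) else 0) (2 ^ n))).
  2:{ intros j Hj. rewrite p_formula. rewrite Rmult_comm, <- Rsum_scal. apply Rsum_ext. intros x Hx.
      destruct (grp n j x); ring. }
  rewrite Rsum_swap. apply Rsum_ext. intros x Hx.
  rewrite (Rsum_unique (fun j => grp n j x) (fun j => Cnorm2 (psi_tensor a b n x) * INR (j mod S n)) _ (jx n x)).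
  - pose proof (jx_grp n x Hx) as G. apply grp_spec in G as [_ [_ G]]. rewrite <- G. auto.
  - apply jx_lt.
  - apply jx_grp; auto.
  - intros j _ Hj. apply grp_jx; auto.
Qed.

Lemma class_split n (g : nat -> R) (G : nat -> nat -> R) :
  (forall x, (x < 2 ^ n)%nat -> g x = G (pop n x) (rank n x)) ->
  Rsum g (2 ^ n) = Rsum (fun k => Rsum (G k) (binom n k)) (S n).
Proof.
  intros H.
  rewrite (Rsum_ext g (fun x => Rsum (fun k => if Nat.eqb (pop n x) k then g x else 0) (S n))).
  2:{ intros x Hx. symmetry. apply (Rsum_unique (fun k => Nat.eqb (pop n x) k) (fun _ => g x) _ (pop n x)).
      pose proof (pop_le n x); lia. apply Nat.eqb_refl. intros k _ Hk. symmetry; apply Nat.eqb_eq; auto. }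
  rewrite Rsum_swap. apply Rsum_ext. intros k Hk. rewrite <- class_sum. apply Rsum_ext. intros x Hx.
  destruct (Nat.eqb_spec (pop n x) k). subst. auto. auto.
Qed.

Lemma asympt eps : 0 < eps -> exists n0 : nat, forall n, (n0 <= n)%nat -> log2 (INR (S n)) + 3 <= INR n * eps.
Proof.
  intros He. set (t := 4 / eps). assert (Ht : 0 < t) by (unfold t; apply Rdiv_lt_0_compat; lra).
  destruct (INR_archimed (eps / 2) (2 * ln t + eps / 2 + 1)) as [n0 Hn0]. lra.
  exists n0. intros n Hn. assert (Hnn : INR n0 <= INR n) by (apply le_INR; auto).
  assert (Hy : 1 <= INR (S n)) by (rewrite S_INR; pose proof (pos_INR n); lra).
  pose proof (ln_le_sub1 (INR (S n) / t)) as H1. assert (0 < INR (S n) / t) by (apply Rdiv_lt_0_compat; lra).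
  specialize (H1 H). unfold Rdiv in H1. rewrite ln_mult, ln_Rinv in H1 by (try apply Rinv_0_lt_compat; lra).
  assert (Hl0 : 0 <= ln (INR (S n))). { destruct Hy as [Hy|Hy]. left. rewrite <- ln_1. apply ln_increasing; lra. rewrite <- Hy, ln_1. lra. }
  assert (Hlog : log2 (INR (S n)) <= 2 * ln (INR (S n))).
  { unfold log2. pose proof ln_lt_2. pose proof ln2_pos.
    assert (Hi : / ln 2 < / / 2) by (apply Rinv_lt_contravar; nra). rewrite Rinv_inv in Hi.
    unfold Rdiv. nra. }
  assert (Ht' : INR (S n) * / t = eps * INR (S n) / 4) by (unfold t; field; lra).
  rewrite Ht' in H1. rewrite S_INR in H1, Hlog |- *.
  assert (INR n0 * (eps / 2) <= INR n * (eps / 2)) by (apply Rmult_le_compat_r; lra). lra.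
Qed.

Lemma perm_id D : perm_on D (fun i => i).
Proof. split; auto. Qed.

Lemma Vnorm2_zero D v : (forall i, (i < D)%nat -> v i = C0) -> Vnorm2 D v = 0.
Proof. intros H. unfold Vnorm2. apply Rsum_zero. intros i Hi. rewrite H; auto. unfold Cnorm2, C0, RtoC; simpl; ring. Qed.

Lemma expected_bound a b n : Cnorm2 a + Cnorm2 b = 1 ->
  INR n * R_I_qubit a b - log2 (INR (S n)) - 3 <=
  Rsum (fun j => Vnorm2 (2 ^ n) (Mapply (2 ^ n) (Kr a b n j) (psi_tensor a b n)) * INR (j mod S n)) (S n * S n).
Proof.
  intros Hn. rewrite expected_eq.
  rewrite (class_split n _ (fun k r => Wk a b n k * INR (bf n (binom n k) r))).
  2:{ intros x Hx. rewrite w_formula. reflexivity. }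
  assert (Hent : INR n * R_I_qubit a b = Rsum (fun k => INR (binom n k) * negxlogx (Wk a b n k)) (S n)).
  { unfold R_I_qubit. rewrite <- sum_nxl by auto.
    rewrite (class_split n _ (fun k r => negxlogx (Wk a b n k))).
    apply Rsum_ext. intros k _. rewrite Rsum_const. auto.
    intros x Hx. rewrite w_formula. reflexivity. }
  assert (Hone : Rsum (fun k => INR (binom n k) * Wk a b n k) (S n) = 1).
  { rewrite <- (sum_w a b n Hn). rewrite (class_split n _ (fun k r => Wk a b n k)).
    apply Rsum_ext. intros k _. rewrite Rsum_const. auto.
    intros x Hx. rewrite w_formula. reflexivity. }
  assert (Hnx : Rsum (fun k => negxlogx (INR (binom n k) * Wk a b n k)) (S n) <= log2 (INR (S n))).
  { apply nxl_sum_le; auto. lia. intros k _. apply Rmult_le_pos. apply pos_INR. apply Wk_nonneg. }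
  apply Rle_trans with (Rsum (fun k => Wk a b n k * (INR (binom n k) * (log2 (INR (binom n k)) - 3))) (S n)).
  2:{ apply Rsum_le. intros k Hk. rewrite Rsum_scal.
      apply (Rmult_le_compat_l (Wk a b n k) _ _ (Wk_nonneg a b n k)).
      apply bf_sum. apply binom_pos. lia. pose proof (binom_le n k). rewrite pow2_S. pose proof (Nat.pow_nonzero 2 n). lia. }
  rewrite (Rsum_ext _ (fun k => INR (binom n k) * negxlogx (Wk a b n k) - negxlogx (INR (binom n k) * Wk a b n k) - 3 * (INR (binom n k) * Wk a b n k))).
  2:{ intros k Hk. assert (1 <= INR (binom n k)) by (apply (le_INR 1); apply binom_pos; lia).
      rewrite (nxl_binom (INR (binom n k)) (Wk a b n k)); auto. ring. apply Wk_nonneg. }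
  rewrite !Rsum_minus, Rsum_scal, Hone, <- Hent. lra.
Qed.

Theorem mainTheorem8 (alpha beta : Cx)
  (Hnorm : Cnorm2 alpha + Cnorm2 beta = 1) (eps : R) (Heps : 0 < eps) :
  exists n0 : nat, forall n : nat, (n0 <= n)%nat ->
    exists (m : nat) (K : nat -> Mat) (r : nat -> nat),
      incoherent_op (2 ^ n) m K /\
      (forall j, (j < m)%nat ->
         let p := Vnorm2 (2 ^ n) (Mapply (2 ^ n) (K j) (psi_tensor alpha beta n)) in
         0 < p ->
         (r j <= n)%nat /\
         exists s : nat -> nat, perm_on (2 ^ n) s /\
           forall i, (i < 2 ^ n)%nat ->
             Vscale (RtoC (/ sqrt p)) (Mapply (2 ^ n) (K j) (psi_tensor alpha beta n)) (s i)
               = target_state n (r j) i) /\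
      Rsum (fun j => Vnorm2 (2 ^ n) (Mapply (2 ^ n) (K j) (psi_tensor alpha beta n))
                       * INR (r j)) m
        >= INR n * (R_I_qubit alpha beta - eps).
Proof.
  destruct (asympt eps Heps) as [n0 Hn0]. exists n0. intros n Hn.
  exists (S n * S n)%nat, (Kr alpha beta n), (fun j => (j mod S n)%nat).
  split; [apply Kr_incoherent|]. split.
  - intros j Hj p Hp. split. pose proof (Nat.mod_upper_bound j (S n)). lia.
    exists (fun i => i). split. apply perm_id. intros i Hi.
    destruct (classic (exists x0, (x0 < 2 ^ n)%nat /\ grp n j x0 = true)) as [[x0 [Hx0 G0]]|Hne].
    + unfold p in *. rewrite (p_nonempty alpha beta n j x0 G0) in *. unfold Vscale, target_state.
      rewrite (Kpsi_nonempty alpha beta n j x0 i G0 Hi).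
      destruct (Nat.eqb _ 0).
      * set (W := Wk alpha beta n (j / S n)) in *. set (X := 2 ^ (j mod S n)) in *.
        assert (HX : 0 < X) by (apply pow_lt; lra).
        assert (HW : 0 < W) by (apply (Rmult_lt_reg_l X); lra).
        rewrite sqrt_mult by lra. pose proof (sqrt_lt_R0 X HX). pose proof (sqrt_lt_R0 W HW).
        unfold Cmul, RtoC; simpl. f_equal; field; lra.
      * apply Cmul_C0_r.
    + exfalso. unfold p in Hp. rewrite Vnorm2_zero in Hp. lra. intros i' Hi'. apply Kpsi_empty.
      intros x Hx. destruct (grp n j x) eqn:E; auto. exfalso; apply Hne; eauto.
  - pose proof (expected_bound alpha beta n Hnorm). pose proof (Hn0 n Hn). apply Rle_ge. nra.
Qed.
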